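(* Let $(V,v)$ be the upper and lower probabilities on $(\Omega,\mathcal{F})$ generated by a nonempty set $\mathcal{P}\subseteq\Delta(\Omega,\mathcal{F})$. The following are equivalent: (i) $V$ is continuous at $\emptyset$; (ii) $V$ is continuous; (iii) $v$ is continuous; (iv) $v$ is continuous at $\Omega$. Moreover, each of (i)–(iv) implies (v): $\mathrm{core}(v)\subseteq\Delta^{\sigma}(\Omega,\mathcal{F})$.
   Context: $\Delta(\Omega,\mathcal{F})$ is the set of finitely additive probabilities on $\mathcal{F}$ and $\Delta^{\sigma}(\Omega,\mathcal{F})$ the set of countably additive probabilities. $V(A)=\sup_{P\in\mathcal{P}}P(A)$, $v(A)=\inf_{P\in\mathcal{P}}P(A)$. A set function $\mu$ is continuous if $\mu(A_n)\to\mu(A)$ whenever $A_n\uparrow A$ or $A_n\downarrow A$; continuous at $\emptyset$ if $\mu(A_n)\to0$ whenever $A_n\downarrow\emptyset$; continuous at $\Omega$ if $\mu(A_n)\to1$ whenever $A_n\uparrow\Omega$. $\mathrm{core}(v)=\{P\in\Delta(\Omega,\mathcal{F}): P\ge v \text{ on } \mathcal{F}\}$. *)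

(* Defs.v *)
From HB Require Import structures.
From mathcomp Require Import all_boot all_order all_algebra.
From mathcomp Require Import all_classical all_reals all_analysis.
Set Implicit Arguments. Unset Strict Implicit. Unset Printing Implicit Defensive.
Import Order.TTheory GRing.Theory Num.Theory numFieldNormedType.Exports.
Local Open Scope classical_set_scope.
Local Open Scope ring_scope.

Section Defs.
Context {d : measure_display} {T : measurableType d} {R : realType}.

(* Set functions are total functions on sets; only their values on the
   sigma-algebra F = measurable are relevant. *)

Definition fa_prob (mu : set T -> R) : Prop :=
  [/\ mu setT = 1,
      (forall A, measurable A -> 0 <= mu A) &
      (forall A B, measurable A -> measurable B -> A `&` B = set0 ->
         mu (A `|` B) = mu A + mu B)].

Definition ca_prob (mu : set T -> R) : Prop :=
  fa_prob mu /\
  forall A : nat -> set T, (forall n, measurable (A n)) -> trivIset setT A ->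
    (fun n => \sum_(0 <= i < n) mu (A i)) @ \oo --> mu (\bigcup_n A n).

Definition upper (PP : set (set T -> R)) (A : set T) : R :=
  sup [set mu A | mu in PP].
Definition lower (PP : set (set T -> R)) (A : set T) : R :=
  inf [set mu A | mu in PP].

Definition cont_from_below (mu : set T -> R) : Prop :=
  forall A : nat -> set T, (forall n, measurable (A n)) ->
    (forall n, A n `<=` A n.+1) ->
    (fun n => mu (A n)) @ \oo --> mu (\bigcup_n A n).

Definition cont_from_above (mu : set T -> R) : Prop :=
  forall A : nat -> set T, (forall n, measurable (A n)) ->
    (forall n, A n.+1 `<=` A n) ->
    (fun n => mu (A n)) @ \oo --> mu (\bigcap_n A n).

Definition continuous_sf (mu : set T -> R) : Prop :=
  cont_from_below mu /\ cont_from_above mu.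

Definition cont_at_empty (mu : set T -> R) : Prop :=
  forall A : nat -> set T, (forall n, measurable (A n)) ->
    (forall n, A n.+1 `<=` A n) -> \bigcap_n A n = set0 ->
    (fun n => mu (A n)) @ \oo --> (0 : R).

Definition cont_at_whole (mu : set T -> R) : Prop :=
  forall A : nat -> set T, (forall n, measurable (A n)) ->
    (forall n, A n `<=` A n.+1) -> \bigcup_n A n = setT ->
    (fun n => mu (A n)) @ \oo --> (1 : R).

Definition core (v : set T -> R) : set (set T -> R) :=
  [set mu | fa_prob mu /\ forall A, measurable A -> v A <= mu A].

End Defs.

(* Main.v *)
Require Import Defs.
From mathcomp Require Import all_boot all_order all_algebra.
From mathcomp Require Import all_classical all_reals all_analysis.
From mathcomp Require Import lra.
Set Implicit Arguments. Unset Strict Implicit.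
Import Order.TTheory GRing.Theory Num.Theory numFieldNormedType.Exports.
Local Open Scope classical_set_scope.
Local Open Scope ring_scope.

Section FA.
Context {d : measure_display} {T : measurableType d} {R : realType}.
Variable mu : set T -> R.
Hypothesis Hmu : fa_prob mu.

Lemma fa0 : mu set0 = 0.
Proof.
case: Hmu => _ _ add.
have := add set0 set0 measurable0 measurable0 (setI0 _).
rewrite setU0 => h; lra.
Qed.

Lemma faD A B : measurable A -> measurable B -> B `<=` A ->
  mu A = mu B + mu (A `\` B).
Proof.
move=> mA mB BA; case: Hmu => _ _ add.
rewrite -add //.
- by rewrite setDUK.
- exact: measurableD.
- by rewrite -subset0 => x [bx [_ nbx]]; exact: nbx bx.
Qed.

Lemma faC A : measurable A -> mu (~` A) = 1 - mu A.
Proof.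
move=> mA; have := faD (A:=setT) measurableT mA (@subsetT _ A).
case: Hmu => -> _ _; rewrite setTD => h; lra.
Qed.

Lemma famono A B : measurable A -> measurable B -> B `<=` A -> mu B <= mu A.
Proof.
move=> mA mB BA; rewrite (faD mA mB BA) lerDl; case: Hmu => _ h _.
exact/h/measurableD.
Qed.

Lemma fale1 A : measurable A -> mu A <= 1.
Proof. move=> mA; case: (Hmu) => <- _ _; exact: famono. Qed.

Lemma fage0 A : measurable A -> 0 <= mu A.
Proof. by case: Hmu => _ h _; apply: h. Qed.

End FA.

Section UL.
Context {d : measure_display} {T : measurableType d} {R : realType}.
Variable PP : set (set T -> R).
Hypothesis HPP : PP !=set0.
Hypothesis Hfa : forall mu, PP mu -> fa_prob mu.

Local Notation V := (upper PP).
Local Notation v := (lower PP).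

Lemma Vub mu A : measurable A -> PP mu -> mu A <= V A.
Proof.
move=> mA Pmu; apply: sup_upper_bound; last by exists mu.
split; first by exists (mu A), mu.
by exists 1 => y [nu Pnu <-]; have := fale1 (Hfa Pnu) mA.
Qed.

Lemma Vle A x : (forall mu, PP mu -> mu A <= x) -> V A <= x.
Proof.
move=> h; apply: ge_sup; first by case: HPP => mu0 P0; exists (mu0 A), mu0.
by move=> y [nu Pnu <-]; exact: h.
Qed.

Lemma vlb mu A : measurable A -> PP mu -> v A <= mu A.
Proof.
move=> mA Pmu; apply: ge_inf; last by exists mu.
by exists 0 => y [nu Pnu <-]; have := fage0 (Hfa Pnu) mA.
Qed.

Lemma vge A x : (forall mu, PP mu -> x <= mu A) -> x <= v A.
Proof.
move=> h; apply: lb_le_inf; first by case: HPP => mu0 P0; exists (mu0 A), mu0.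
by move=> y [nu Pnu <-]; exact: h.
Qed.

Lemma Vsub A B : measurable A -> measurable B -> B `<=` A ->
  V A <= V B + V (A `\` B).
Proof.
move=> mA mB BA; apply: Vle => mu Pmu.
rewrite (faD (Hfa Pmu) mA mB BA); apply: lerD; apply: Vub => //.
exact: measurableD.
Qed.

Lemma Vmono A B : measurable A -> measurable B -> B `<=` A -> V B <= V A.
Proof.
move=> mA mB BA; apply: Vle => mu Pmu.
exact: le_trans (famono (Hfa Pmu) mA mB BA) (Vub mA Pmu).
Qed.

Lemma V0 : V set0 = 0.
Proof.
apply/le_anti/andP; split.
  by apply: Vle => mu Pmu; rewrite (fa0 (Hfa Pmu)).
case: HPP => mu0 P0; rewrite -(fa0 (Hfa P0)); exact: Vub.
Qed.

Lemma vV A : measurable A -> v A = 1 - V (~` A).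
Proof.
move=> mA; apply/le_anti/andP; split.
  suff : V (~` A) <= 1 - v A by move=> h; lra.
  apply: Vle => mu Pmu; rewrite (faC (Hfa Pmu) mA).
  have := vlb mA Pmu; lra.
apply: vge => mu Pmu.
have := Vub (measurableC mA) Pmu; rewrite (faC (Hfa Pmu) mA); lra.
Qed.

Lemma Vv A : measurable A -> V A = 1 - v (~` A).
Proof. move=> mA; rewrite vV ?setCK; [lra | exact: measurableC]. Qed.

Lemma v1 : v setT = 1.
Proof. by rewrite vV // setCT V0 subr0. Qed.

End UL.

Section Dual.
Context {d : measure_display} {T : measurableType d} {R : realType}.

Lemma dual_below (f g : set T -> R) :
  (forall A, measurable A -> f A = 1 - g (~` A)) ->
  cont_from_above g -> cont_from_below f.
Proof.
move=> fg cg A mA incA.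
have -> : (fun n => f (A n)) = (fun n => 1 - g (~` A n)).
  by apply: funext => n; exact: fg.
rewrite fg; last exact: bigcupT_measurable.
rewrite setC_bigcup.
apply: (cvgB (cvg_cst _)); apply: cg => n; [exact: measurableC | exact: subsetC].
Qed.

Lemma dual_above (f g : set T -> R) :
  (forall A, measurable A -> f A = 1 - g (~` A)) ->
  cont_from_below g -> cont_from_above f.
Proof.
move=> fg cg A mA decA.
have -> : (fun n => f (A n)) = (fun n => 1 - g (~` A n)).
  by apply: funext => n; exact: fg.
rewrite fg; last exact: bigcapT_measurable.
rewrite setC_bigcap.
apply: (cvgB (cvg_cst _)); apply: cg => n; [exact: measurableC | exact: subsetC].
Qed.

End Dual.

Section Main.
Context {d : measure_display} {T : measurableType d} {R : realType}.
Variable PP : set (set T -> R).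
Hypothesis HPP : PP !=set0.
Hypothesis Hfa : forall mu, PP mu -> fa_prob mu.

Local Notation V := (upper PP).
Local Notation v := (lower PP).

Lemma empty_cont : cont_at_empty V -> continuous_sf V.
Proof.
move=> ce; split.
- move=> A mA incA.
  set B := \bigcup_n A n.
  have mB : measurable B by exact: bigcupT_measurable.
  have AB n : A n `<=` B by move=> x Ax; exists n.
  apply: (@squeeze_cvgr _ _ _ _ (fun n => V B - V (B `\` A n)) (fun _ => V B)).
  + apply: nearW => n; rewrite (Vmono HPP Hfa mB (mA n) (AB n)) andbT.
    have := Vsub HPP Hfa mB (mA n) (AB n); lra.
  + rewrite -[X in _ --> X]subr0; apply: (cvgB (cvg_cst _)); apply: ce.
    * by move=> n; apply: measurableD.
    * by move=> n x [Bx nAx]; split => // Ax; apply: nAx; apply: incA.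
    * rewrite -subset0 => x Hx; have [Bx _] := Hx 0%N I.
      by case: Bx => k _ Akx; have [_ /(_ Akx)] := Hx k I.
  + exact: cvg_cst.
- move=> A mA decA.
  set B := \bigcap_n A n.
  have mB : measurable B by exact: bigcapT_measurable.
  have BA n : B `<=` A n by move=> x /(_ n I).
  apply: (@squeeze_cvgr _ _ _ _ (fun _ => V B) (fun n => V B + V (A n `\` B))).
  + apply: nearW => n; rewrite (Vmono HPP Hfa (mA n) mB (BA n)) /=.
    by have := Vsub HPP Hfa (mA n) mB (BA n).
  + exact: cvg_cst.
  + rewrite -[X in _ --> X]addr0; apply: (cvgD (cvg_cst _)); apply: ce.
    * by move=> n; apply: measurableD.
    * by move=> n x [Ax nBx]; split => //; apply: decA.
    * rewrite -subset0 => x Hx; have [_ nBx] := Hx 0%N I.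
      by apply: nBx => n _; have [] := Hx n I.
Qed.

Lemma cont_empty : continuous_sf V -> cont_at_empty V.
Proof.
by move=> [_ ca] A mA dA capA; have := ca A mA dA; rewrite capA (V0 HPP Hfa).
Qed.

Lemma contVv : continuous_sf V <-> continuous_sf v.
Proof.
split=> -[cb ca]; split.
- exact: dual_below (vV HPP Hfa) ca.
- exact: dual_above (vV HPP Hfa) cb.
- exact: dual_below (Vv HPP Hfa) ca.
- exact: dual_above (Vv HPP Hfa) cb.
Qed.

Lemma whole_empty : cont_at_whole v -> cont_at_empty V.
Proof.
move=> cw A mA dA capA.
have -> : (fun n => V (A n)) = (fun n => 1 - v (~` A n)).
  by apply: funext => n; exact: Vv.
rewrite -(subrr (1:R)); apply: (cvgB (cvg_cst _)); apply: cw.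
- by move=> n; exact: measurableC.
- by move=> n; exact: subsetC.
- by rewrite -setC_bigcap capA setC0.
Qed.

Lemma core_ca : cont_at_empty V -> core v `<=` [set mu | ca_prob mu].
Proof.
move=> ce mu [fmu gev]; split => // A mA tA.
have muV B : measurable B -> mu B <= V B.
  move=> mB; rewrite (Vv HPP Hfa mB).
  have := gev _ (measurableC mB); rewrite (faC fmu mB); lra.
set C := fun n => \bigcup_(i in [set k | (n <= k)%N]) A i.
have mC n : measurable (C n) by apply: bigcup_measurable => k _; exact: mA.
have mU : measurable (\bigcup_n A n) by exact: bigcupT_measurable.
have C0 : C 0%N = \bigcup_n A n.
  by apply/seteqP; split => x [k _ Akx]; exists k.
have CS n : C n = A n `|` C n.+1.
  rewrite /C; apply/seteqP; split => x.
  - move=> [k /= nk Akx]; rewrite leq_eqVlt in nk; case/orP: nk => [/eqP ->|nk].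
      by left.
    by right; exists k.
  - case=> [Anx|[k /= nk Akx]]; first by exists n => /=.
    by exists k => //=; apply: ltnW.
have dis n : A n `&` C n.+1 = set0.
  rewrite /C -subset0 => x [Anx [k /= nk Akx]].
  have nk' : n = k by apply: tA => //; exists x.
  by rewrite nk' ltnn in nk.
have sumE n : mu (\bigcup_n A n) = \sum_(0 <= i < n) mu (A i) + mu (C n).
  elim: n => [|n IH]; first by rewrite big_geq // add0r C0.
  rewrite IH big_nat_recr //= CS.
  case: fmu => _ _ add; rewrite add //; first by rewrite addrA.
have -> : (fun n => \sum_(0 <= i < n) mu (A i)) =
          (fun n => mu (\bigcup_n A n) - mu (C n)).
  by apply: funext => n; rewrite (sumE n) addrK.
rewrite -[X in _ --> X]subr0; apply: (cvgB (cvg_cst _)).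
have decC n : C n.+1 `<=` C n by rewrite (CS n) => x Cx; right.
have cC : (fun n => V (C n)) @ \oo --> (0:R).
  apply: ce => //.
  rewrite -subset0 => x Hx; have [k _ Akx] := Hx 0%N I.
  have [j /= kj Ajx] := Hx k.+1 I.
  have kj' : k = j by apply: tA => //; exists x.
  by rewrite kj' ltnn in kj.
apply: (@squeeze_cvgr _ _ _ _ (fun _ => 0) (fun n => V (C n))) => //.
- by apply: nearW => n; rewrite (fage0 fmu (mC n)) muV.
- exact: cvg_cst.
Qed.

End Main.

Theorem proposition2 (d : measure_display) (T : measurableType d) (R : realType)
  (PP : set (set T -> R)) :
  PP !=set0 -> (forall mu, PP mu -> fa_prob mu) ->
  [/\ (cont_at_empty (upper PP) <-> continuous_sf (upper PP)),
      (continuous_sf (upper PP) <-> continuous_sf (lower PP)),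
      (continuous_sf (lower PP) <-> cont_at_whole (lower PP)) &
      (cont_at_empty (upper PP) -> core (lower PP) `<=` [set mu | ca_prob mu])].
Proof.
move=> HPP Hfa; split.
- split; [exact: empty_cont | exact: cont_empty].
- exact: contVv.
- split.
  + move=> [cb _] A mA iA cupA; have := cb A mA iA.
    by rewrite cupA (v1 HPP Hfa).
  + move=> cw; apply/(contVv HPP Hfa).
    exact/(empty_cont HPP Hfa)/(whole_empty HPP Hfa).
- exact: core_ca.
Qed.
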